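(* Let $f(x)=\frac1n\sum_{i=1}^nf_i(x)$ on $\mathbb{R}^d$ where each $f_i$ is convex (not necessarily differentiable) and lower bounded, and let $x^*$ be a minimizer of $f$. For any non-decreasing positive sequence $(c_k)_{k\ge0}$, consider the stochastic subgradient method with the DecSPS-NS stepsize (defined in the context). Then for every $K\ge1$, $$\mathbb{E}[f(\bar x^K)-f(x^* )]\le\frac{c_{K-1}D^2}{\gamma_\ell c_0K}+\frac1K\sum_{k=0}^{K-1}\frac{c_0\gamma_bG^2}{c_k},$$ where $\bar x^K=\frac1K\sum_{k=0}^{K-1}x^k$, $D^2:=\max_{k\in[K-1]}\|x^k-x^*\|^2$ and $G^2:=\max_{k\in[K-1]}\|g_{\mathcal S_k}(x^k)\|^2$.
   Context: Minibatches: fix a batch size $B$; at each iteration a subset $\mathcal S_k\subseteq[n]$, $|\mathcal S_k|=B$, is sampled uniformly at random, independently across iterations. For $\mathcal S\subseteq[n]$, $f_{\mathcal S}:=\frac1{|\mathcal S|}\sum_{i\in\mathcal S}f_i$, $f^*_{\mathcal S}:=\inf_xf_{\mathcal S}(x)$, $\ell^*_{\mathcal S}$ is a given real number with $\ell^*_{\mathcal S}\le f^*_{\mathcal S}$, and $g_{\mathcal S}(x)$ denotes a subgradient of $f_{\mathcal S}$ at $x$. Method: $x^{k+1}=x^k-\gamma_kg_{\mathcal S_k}(x^k)$. DecSPS-NS stepsize: $\gamma_k:=\frac1{c_k}\min\left\{\max\left\{c_0\gamma_\ell,\ \frac{f_{\mathcal S_k}(x^k)-\ell^*_{\mathcal S_k}}{\|g_{\mathcal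 S_k}(x^k)\|^2}\right\},\ c_{k-1}\gamma_{k-1}\right\}$ for $k\ge0$, with $c_{-1}=c_0$, $\gamma_{-1}=\gamma_b$, where $0<\gamma_\ell\le\gamma_b$ are fixed constants. $[K-1]$ denotes $\{0,\dots,K-1\}$. *)

(* Defs.v *)
From HB Require Import structures.
From mathcomp Require Import all_boot all_order all_algebra.
From mathcomp Require Import classical_sets reals.
Set Implicit Arguments. Unset Strict Implicit. Unset Printing Implicit Defensive.
Import Order.TTheory GRing.Theory Num.Theory.
Local Open Scope ring_scope.

Section Defs.
Variables (R : realType) (d n : nat).
Notation vec := 'rV[R]_d.

Definition dotp (u v : vec) : R := \sum_(j < d) u 0 j * v 0 j.
Definition sqnorm (u : vec) : R := dotp u u.

Definition convex_fun (h : vec -> R) : Prop :=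
  forall (x y : vec) (t : R), 0 <= t -> t <= 1 ->
    h (t *: x + (1 - t) *: y) <= t * h x + (1 - t) * h y.

Definition lower_bounded (h : vec -> R) : Prop :=
  exists m : R, forall x, m <= h x.

Definition is_subgradient (h : vec -> R) (g x : vec) : Prop :=
  forall y : vec, h x + dotp g (y - x) <= h y.

Definition favg (f : 'I_n -> vec -> R) (x : vec) : R :=
  n%:R^-1 * \sum_(i < n) f i x.

Definition fS (f : 'I_n -> vec -> R) (S : {set 'I_n}) (x : vec) : R :=
  (#|S|%:R)^-1 * \sum_(i in S) f i x.

Definition fSstar (f : 'I_n -> vec -> R) (S : {set 'I_n}) : R :=
  inf [set fS f S x | x in [set: vec]].

(* One step of SGD with DecSPS-NS. State = (x^k, c_{k-1} gamma_{k-1}).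
   Returns (gamma_k, x^{k+1}, c_k gamma_k). *)
Definition decsps_gamma (f : 'I_n -> vec -> R) (ell : {set 'I_n} -> R)
  (g : {set 'I_n} -> vec -> vec) (c : nat -> R) (gl : R)
  (k : nat) (S : {set 'I_n}) (x : vec) (prev : R) : R :=
  (c k)^-1 * Num.min (Num.max (c 0%N * gl) ((fS f S x - ell S) / sqnorm (g S x))) prev.

(* state after k steps: (x^k, c_{k-1} gamma_{k-1}), with c_{-1} gamma_{-1} = c_0 gamma_b *)
Fixpoint decsps_state (f : 'I_n -> vec -> R) (ell : {set 'I_n} -> R)
  (g : {set 'I_n} -> vec -> vec) (c : nat -> R) (gl gb : R)
  (Ss : nat -> {set 'I_n}) (x0 : vec) (k : nat) : vec * R :=
  match k with
  | 0%N => (x0, c 0%N * gb)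
  | k'.+1 =>
      let st := decsps_state f ell g c gl gb Ss x0 k' in
      let gam := decsps_gamma f ell g c gl k' (Ss k') st.1 st.2 in
      (st.1 - gam *: g (Ss k') st.1, c k' * gam)
  end.

Definition iterate f ell g c gl gb Ss x0 k : vec :=
  (decsps_state f ell g c gl gb Ss x0 k).1.

(* Sample space for K iterations: sequences (S_0,...,S_{K-1}) of B-subsets of [n].
   Uniform i.i.d. sampling = uniform distribution on this finite set. *)
Definition batch_seqs (B K : nat) : {set {ffun 'I_K -> {set 'I_n}}} :=
  [set w : {ffun 'I_K -> {set 'I_n}} | [forall i : 'I_K, #|w i| == B]].

Definition seq_of (K : nat) (w : {ffun 'I_K -> {set 'I_n}}) (k : nat) : {set 'I_n} :=
  if insub k is Some i then w i else finset.set0.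

Definition Expect (B K : nat) (X : {ffun 'I_K -> {set 'I_n}} -> R) : R :=
  (\sum_(w in batch_seqs B K) X w) / #|batch_seqs B K|%:R.

End Defs.

(* Main.v *)
Require Import Defs.
From HB Require Import structures.
From mathcomp Require Import all_boot all_order all_algebra.
From mathcomp Require Import classical_sets reals ring lra.
Import Order.TTheory GRing.Theory Num.Theory.
Local Open Scope ring_scope.

Section Helpers.
Variables (R : realType) (d : nat).
Notation vec := 'rV[R]_d.

Lemma sqnorm_step (u v : vec) (a : R) :
  sqnorm (u - a *: v) = sqnorm u - 2 * a * dotp v u + a ^+ 2 * sqnorm v.
Proof.
rewrite /sqnorm /dotp !mulr_sumr -sumrB -big_split /=.
by apply: eq_bigr => j _; rewrite !mxE; ring.
Qed.

Lemma dotp_neg (u v w : vec) : dotp u (v - w) = - dotp u (w - v).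
Proof. by rewrite /dotp -sumrN; apply: eq_bigr => j _; rewrite !mxE; ring. Qed.

Lemma sqnorm_ge0 (u : vec) : 0 <= sqnorm u.
Proof. by apply: sumr_ge0 => j _; rewrite -expr2 sqr_ge0. Qed.

Lemma jensen (h : vec -> R) : convex_fun h -> forall m (x : nat -> vec),
  h ((m.+1)%:R^-1 *: \sum_(k < m.+1) x k) <= (m.+1)%:R^-1 * \sum_(k < m.+1) h (x k).
Proof.
move=> hc; elim=> [|m IH] x.
  by rewrite !big_ord1 invr1 scale1r mul1r.
rewrite big_ord_recr /= [in X in _ <= X]big_ord_recr /=.
set S := \sum_(i < m.+1) x i; set Hs := \sum_(i < m.+1) h (x i).
set a : R := (m.+1)%:R.
have ha : 0 < a by rewrite /a ltr0n.
have eN : (m.+2)%:R = a + 1 :> R by rewrite -[m.+2]addn1 natrD.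
rewrite eN.
set t := (a + 1)^-1.
have ht0 : 0 < t by rewrite invr_gt0; lra.
have ht1 : t <= 1 by rewrite invf_le1; lra.
have e1 : (1 - t) * a^-1 = t.
  rewrite /t; field; apply/andP; split; apply/negP => /eqP; lra.
have -> : t *: (S + x m.+1) = t *: x m.+1 + (1 - t) *: (a^-1 *: S).
  by rewrite scalerA e1 scalerDr addrC.
apply: le_trans (hc _ _ _ _ _) _; [lra|lra|].
have := IH x; rewrite -/S -/Hs -/a => IH'.
have : (1 - t) * h (a^-1 *: S) <= (1 - t) * (a^-1 * Hs).
  by apply: ler_wpM2l => //; lra.
have -> : (1 - t) * (a^-1 * Hs) = t * Hs by rewrite mulrA e1.
lra.
Qed.

Lemma telesc (a u : nat -> R) (D : R) m :
  (forall k, (k <= m)%N -> a k <= D) -> (forall k, 0 < u k) ->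
  (forall k, u k <= u k.+1) -> (forall k, 0 <= a k) ->
  \sum_(k < m.+1) (a k - a k.+1) * u k <= D * u m.
Proof.
move=> hD hu hinc ha.
suff : \sum_(k < m.+1) (a k - a k.+1) * u k + a m.+1 * u m <= D * u m.
  have := ha m.+1; have := hu m; nra.
elim: m hD => [|m IH] hD.
  rewrite big_ord1; have := hD 0%N (leqnn _); have := hu 0%N; nra.
rewrite big_ord_recr /=.
have IH' := IH (fun k hk => hD k (leqW hk)).
have h1 := hD m.+1 (leqnn _).
have h2 : 0 <= (D - a m.+1) * (u m.+1 - u m).
  by apply: mulr_ge0; [lra | have := hinc m; lra].
nra.
Qed.

End Helpers.


Section Traj.
Variables (R : realType) (d n B : nat).
Notation vec := 'rV[R]_d.
Variables (f : 'I_n -> vec -> R) (g : {set 'I_n} -> vec -> vec)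
  (ell : {set 'I_n} -> R) (c : nat -> R) (gl gb : R) (x0 xstar : vec).
Hypotheses (hsub : forall (S : {set 'I_n}) x, #|S| = B -> is_subgradient (fS f S) (g S x) x)
  (hc : forall k, 0 < c k) (hcinc : forall k, c k <= c k.+1)
  (hgl : 0 < gl) (hglb : gl <= gb).

Lemma state_dep (Ss Ss' : nat -> {set 'I_n}) k :
  (forall j, (j < k)%N -> Ss j = Ss' j) ->
  decsps_state f ell g c gl gb Ss x0 k = decsps_state f ell g c gl gb Ss' x0 k.
Proof.
elim: k => [//|k IH] h /=.
by rewrite IH ?h // => j hj; apply: h; exact: ltnW.
Qed.

Variable Ss : nat -> {set 'I_n}.
Let st k := decsps_state f ell g c gl gb Ss x0 k.
Let xk k := (st k).1.
Let p k := (st k).2.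
Let mm k := Num.min (Num.max (c 0%N * gl) ((fS f (Ss k) (xk k) - ell (Ss k)) / sqnorm (g (Ss k) (xk k)))) (p k).
Let gam k := decsps_gamma f ell g c gl k (Ss k) (xk k) (p k).

Lemma gam_mm k : gam k = (c k)^-1 * mm k.
Proof. by []. Qed.

Lemma p_succ k : p k.+1 = mm k.
Proof.
rewrite /p /st /= -/(st k) -/(xk k) -/(p k) -/(gam k) gam_mm mulrA mulfV ?mul1r //.
by apply: lt0r_neq0.
Qed.

Lemma x_succ k : xk k.+1 = xk k - gam k *: g (Ss k) (xk k).
Proof. by []. Qed.

Lemma p_bounds k : c 0%N * gl <= p k <= c 0%N * gb.
Proof.
elim: k => [|k IH].
  rewrite /p /st /= lexx andbT; apply: ler_wpM2l => //; exact: ltW.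
rewrite p_succ /mm; apply/andP; split.
  rewrite le_min le_max lexx /=; by case/andP: IH.
rewrite ge_min; apply/orP; right; by case/andP: IH.
Qed.

Lemma mm_bounds k : c 0%N * gl <= mm k <= c 0%N * gb.
Proof. by rewrite -p_succ p_bounds. Qed.

Lemma mm_le_p k : mm k <= p k.
Proof. by rewrite /mm ge_min lexx orbT. Qed.

Lemma gam_pos k : 0 < gam k.
Proof.
rewrite gam_mm; apply: mulr_gt0; first by rewrite invr_gt0.
have := mm_bounds k => /andP[+ _]; have := hc 0%N => h0 h1; have h2 : 0 < c 0%N * gl by apply: mulr_gt0.
lra.
Qed.

Lemma gam_dec k : gam k.+1 <= gam k.
Proof.
rewrite !gam_mm.
have h1 := mm_le_p k.+1; rewrite p_succ in h1.
have hk := hc k; have hk1 := hc k.+1; have hi := hcinc k.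
have hm : 0 < mm k by have := mm_bounds k => /andP[h0 _]; have := mulr_gt0 (hc 0%N) hgl => h2; lra.
apply: le_trans (_ : (c k.+1)^-1 * mm k <= _).
  by apply: ler_wpM2l => //; rewrite invr_ge0 ltW.
apply: ler_wpM2r; first exact: ltW.
by rewrite lef_pV2 ?posrE.
Qed.

Lemma invgam_inc k : (gam k)^-1 <= (gam k.+1)^-1.
Proof. by rewrite lef_pV2 ?posrE ?gam_pos ?gam_dec. Qed.

Lemma invgam_le k : (gam k)^-1 <= c k / (c 0%N * gl).
Proof.
rewrite gam_mm invfM invrK; apply: ler_wpM2l; first exact: ltW.
have := mm_bounds k => /andP[h _].
by rewrite lef_pV2 ?posrE // ?mulr_gt0 //; apply: lt_le_trans h; rewrite mulr_gt0.
Qed.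

Lemma gam_le k : gam k <= c 0%N * gb / c k.
Proof.
rewrite gam_mm mulrC; apply: ler_wpM2r; first by rewrite invr_ge0 ltW.
by have := mm_bounds k => /andP[].
Qed.

Let a k := sqnorm (xk k - xstar).
Let hk k := fS f (Ss k) (xk k) - fS f (Ss k) xstar.
Let Gk k := sqnorm (g (Ss k) (xk k)).

Lemma step_ineq k : #|Ss k| = B ->
  2 * hk k <= (a k - a k.+1) * (gam k)^-1 + gam k * Gk k.
Proof.
move=> hB.
have hs := hsub (Ss k) (xk k) hB xstar.
rewrite dotp_neg in hs.
set P := dotp (g (Ss k) (xk k)) (xk k - xstar) in hs.
have ea : a k.+1 = a k - 2 * gam k * P + gam k ^+ 2 * Gk k.
  rewrite /a x_succ (_ : xk k - gam k *: g (Ss k) (xk k) - xstar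
     = (xk k - xstar) - gam k *: g (Ss k) (xk k)); last by rewrite addrAC.
  by rewrite sqnorm_step.
have hg := gam_pos k.
have -> : (a k - a k.+1) * (gam k)^-1 + gam k * Gk k = 2 * P.
  rewrite ea; field; exact: lt0r_neq0.
rewrite /hk; lra.
Qed.

Lemma traj_bound K : (forall k, (k < K.+1)%N -> #|Ss k| = B) ->
  2 * \sum_(k < K.+1) hk k <=
  \big[Num.max/0]_(k < K.+1) a k * c K / (c 0%N * gl)
  + \sum_(k < K.+1) (c 0%N * gb * \big[Num.max/0]_(j < K.+1) Gk j / c k).
Proof.
move=> hB.
set D := \big[Num.max/0]_(k < K.+1) a k.
set G := \big[Num.max/0]_(j < K.+1) Gk j.
have : 2 * \sum_(k < K.+1) hk k <=
   \sum_(k < K.+1) ((a k - a k.+1) * (gam k)^-1) + \sum_(k < K.+1) (gam k * Gk k).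
  rewrite -big_split mulr_sumr /=; apply: ler_sum => k _; apply: step_ineq; exact: hB.
have t1 : \sum_(k < K.+1) ((a k - a k.+1) * (gam k)^-1) <= D * (gam K)^-1.
  apply: (@telesc R a (fun k => (gam k)^-1) D K).
  - by move=> k hk'; rewrite /D (le_bigmax _ (fun i : 'I_K.+1 => a i) (Ordinal (hk' : (k < K.+1)%N))).
  - by move=> k; rewrite invr_gt0 gam_pos.
  - exact: invgam_inc.
  - by move=> k; exact: sqnorm_ge0.
have hD0 : 0 <= D by rewrite /D bigmax_ge_id.
have t2 : D * (gam K)^-1 <= D * c K / (c 0%N * gl).
  by rewrite -mulrA; apply: ler_wpM2l => //; exact: invgam_le.
have t3 : \sum_(k < K.+1) (gam k * Gk k) <= \sum_(k < K.+1) (c 0%N * gb * G / c k).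
  apply: ler_sum => k _.
  have hG : Gk k <= G by rewrite /G (le_bigmax _ (fun i : 'I_K.+1 => Gk i) k).
  have h1 := gam_le k; have h2 := gam_pos k; have h3 : 0 <= Gk k by exact: sqnorm_ge0.
  have -> : c 0%N * gb * G / c k = (c 0%N * gb / c k) * G by rewrite mulrAC.
  apply: le_trans (_ : gam k * G <= _).
    by apply: ler_wpM2l => //; exact: ltW.
  apply: ler_wpM2r => //; exact: le_trans hG.
lra.
Qed.

End Traj.


Section Sym.
Variables (R : realType) (d n' : nat).
Notation n := n'.+1.
Notation vec := 'rV[R]_d.
Variables (K B : nat) (k : 'I_K).
Notation W := {ffun 'I_K -> {set 'I_n}}.

Definition phi (t : 'I_n) (w : W) : W :=
  [ffun j => if j == k then [set i + t | i in w j] else w j].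

Lemma phi_inj t : injective (phi t).
Proof.
move=> w1 w2 h; apply/ffunP => j.
have := congr1 (fun w : W => w j) h; rewrite /phi !ffunE.
case: ifP => // _; apply: imset_inj; exact: addIr.
Qed.

Lemma phi_mem t w : (phi t w \in batch_seqs n B K) = (w \in batch_seqs n B K).
Proof.
rewrite !inE; apply: eq_forallb => j; rewrite /phi ffunE.
case: ifP => // _; rewrite card_imset //; exact: addIr.
Qed.

Lemma sum_shift (f : 'I_n -> vec -> R) (S : {set 'I_n}) (y : vec) :
  (0 < #|S|)%N ->
  \sum_(t < n) fS f [set i + t | i in S] y = n%:R * favg f y.
Proof.
move=> hS.
have hS' : (#|S|%:R : R) != 0 by rewrite pnatr_eq0 -lt0n.
have e1 : forall t : 'I_n, fS f [set i + t | i in S] y = (#|S|%:R)^-1 * \sum_(i in S) f (i + t) y.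
  move=> t; rewrite /fS card_imset; last exact: addIr.
  by rewrite big_imset //; move=> i j _ _; apply: addIr.
under eq_bigr => t _ do rewrite e1.
rewrite /favg.
rewrite -mulr_sumr exchange_big /=.
have e2 : forall i : 'I_n, \sum_(j < n) f (i + j) y = \sum_(j < n) f j y.
  by move=> i; rewrite [RHS](reindex_inj (addrI i)).
under eq_bigr => i _ do rewrite e2.
have hn : (n%:R : R) != 0 by rewrite pnatr_eq0.
rewrite sumr_const -mulr_natr; field.
by rewrite addrC natr1 hn hS'.
Qed.

Lemma sym (f : 'I_n -> vec -> R) (Y : W -> vec) : (0 < B)%N ->
  (forall t w, Y (phi t w) = Y w) ->
  \sum_(w in batch_seqs n B K) fS f (w k) (Y w) =
  \sum_(w in batch_seqs n B K) favg f (Y w).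
Proof.
move=> hB hY.
have hn : (n%:R : R) != 0 by rewrite pnatr_eq0.
apply: (mulfI hn).
set F := fun w : W => fS f (w k) (Y w).
have e : forall t, \sum_(w in batch_seqs n B K) F w = \sum_(w in batch_seqs n B K) F (phi t w).
  move=> t; rewrite (reindex_inj (phi_inj t)) /=.
  by apply: eq_bigl => w; rewrite phi_mem.
transitivity (\sum_(t < n) \sum_(w in batch_seqs n B K) F (phi t w)).
  by rewrite -(eq_bigr _ (fun t _ => e t)) sumr_const card_ord mulr_natl.
rewrite exchange_big mulr_sumr; apply: eq_bigr => w hw.
have hc : #|w k| = B by move: hw; rewrite inE => /forallP /(_ k) /eqP.
under eq_bigr => t _ do rewrite /F hY /phi ffunE eqxx.
by rewrite sum_shift // hc.
Qed.
End Sym.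


Lemma favg_convex (R : realType) (d n : nat) (f : 'I_n -> 'rV[R]_d -> R) :
  (forall i, convex_fun (f i)) -> convex_fun (favg f).
Proof.
move=> hc x y t h0 h1; rewrite /favg.
apply: le_trans (_ : n%:R^-1 * \sum_(i < n) (t * f i x + (1 - t) * f i y) <= _).
  apply: ler_wpM2l; first by rewrite invr_ge0 ler0n.
  by apply: ler_sum => i _; apply: hc.
rewrite big_split /= -!mulr_sumr le_eqVlt; apply/orP; left; apply/eqP; ring.
Qed.

Theorem theorem5 (R : realType) (d n B : nat)
  (f : 'I_n -> 'rV[R]_d -> R)
  (g : {set 'I_n} -> 'rV[R]_d -> 'rV[R]_d)
  (ell : {set 'I_n} -> R)
  (c : nat -> R) (gl gb : R) (x0 xstar : 'rV[R]_d) (K : nat) :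
  (0 < B)%N -> (B <= n)%N ->
  (forall i, convex_fun (f i)) ->
  (forall i, lower_bounded (f i)) ->
  (forall x, favg f xstar <= favg f x) ->
  (forall S : {set 'I_n}, #|S| = B -> ell S <= fSstar f S) ->
  (forall (S : {set 'I_n}) x, #|S| = B -> is_subgradient (fS f S) (g S x) x) ->
  (forall k, 0 < c k) -> (forall k, c k <= c k.+1) ->
  0 < gl -> gl <= gb ->
  (1 <= K)%N ->
  let x := fun (w : {ffun 'I_K -> {set 'I_n}}) (k : nat) => iterate f ell g c gl gb (seq_of w) x0 k in
  let xbar := fun (w : {ffun 'I_K -> {set 'I_n}}) => K%:R^-1 *: \sum_(k < K) x w k in
  let D2 := fun (w : {ffun 'I_K -> {set 'I_n}}) => \big[Num.max/0]_(k < K) sqnorm (x w k - xstar) in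
  let G2 := fun (w : {ffun 'I_K -> {set 'I_n}}) => \big[Num.max/0]_(k < K) sqnorm (g (seq_of w k) (x w k)) in
  Expect B (fun (w : {ffun 'I_K -> {set 'I_n}}) => favg f (xbar w) - favg f xstar)
  <= Expect B (fun (w : {ffun 'I_K -> {set 'I_n}}) =>
       c K.-1 * D2 w / (gl * c 0%N * K%:R)
       + K%:R^-1 * \sum_(k < K) (c 0%N * gb * G2 w / c k)).
Proof.
move=> hB hBn hconv hlb hmin hell hsub hc hcinc hgl hglb.
destruct n as [|n']; first by move: (leq_trans hB hBn); rewrite ltnn.
case: K => [//|K] _.
cbv zeta.
set x := fun w : {ffun _ -> _} => iterate f ell g c gl gb (seq_of w) x0.
rewrite /Expect; apply: ler_wpM2r; first by rewrite invr_ge0 ler0n.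
set A := batch_seqs n'.+1 B K.+1.
set K1 : R := (K.+1)%:R.
have hK1 : 0 < K1 by rewrite ltr0n.
pose hk w (k : nat) := fS f (seq_of w k) (x w k) - fS f (seq_of w k) xstar.
apply: le_trans (_ : \sum_(w in A) (K1^-1 * \sum_(k < K.+1) (favg f (x w k) - favg f xstar)) <= _).
  apply: ler_sum => w _.
  have hj := @jensen _ _ _ (@favg_convex _ _ _ f hconv) K (x w).
  rewrite -/K1 in hj.
  rewrite sumrB sumr_const card_ord mulrBr -mulr_natr -/K1.
  rewrite mulrCA mulVf ?mulr1; last exact: lt0r_neq0.
  by rewrite lerD2r.
have sk : forall (w : {ffun 'I_K.+1 -> {set 'I_n'.+1}}) (k : 'I_K.+1), seq_of w k = w k.
  by move=> w k; rewrite /seq_of valK.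
have hinv : forall (k : 'I_K.+1) t w, x (phi n' K.+1 k t w) k = x w k.
  move=> k t w; rewrite /x /iterate; congr fst; apply: state_dep => j hj.
  rewrite /seq_of; case: insubP => [i _ vi|_] //; rewrite /phi ffunE.
  case: eqP => // eik; move: hj; by rewrite -vi eik ltnn.
have e2 : \sum_(w in A) K1^-1 * \sum_(k < K.+1) (favg f (x w k) - favg f xstar)
        = \sum_(w in A) K1^-1 * \sum_(k < K.+1) hk w k.
  rewrite -!mulr_sumr; congr (_ * _); rewrite exchange_big [RHS]exchange_big /=.
  apply: eq_bigr => k _; rewrite /hk !sumrB.
  under [in RHS]eq_bigr => w _ do rewrite !sk.
  rewrite /A (@sym _ _ _ _ _ k f (fun w => x w k) hB) //.
  move: (@sym _ _ _ _ _ k f (fun _ => xstar) hB (fun _ _ => erefl)) => /= s2.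
  by rewrite -s2; congr (_ - _); apply: eq_bigr => w _; rewrite sk.
rewrite e2; apply: ler_sum => w hw.
have hBw : forall k, (k < K.+1)%N -> #|seq_of w k| = B.
  move=> k hk'; rewrite /seq_of insubT /=.
  by move: hw; rewrite inE => /forallP /(_ (Ordinal hk')) /eqP.
have tb := @traj_bound _ _ _ _ _ _ _ _ _ _ x0 xstar hsub hc hcinc hgl hglb _ _ hBw.
move: (tb ell) => {}tb.
rewrite /hk /x /iterate /=.
set D := \big[Num.max/0]_(k < K.+1) sqnorm (_ - xstar) in tb *.
set G := \big[Num.max/0]_(j < K.+1) sqnorm (g _ _) in tb *.
set S := \sum_(k < K.+1) _ in tb *.
set T := \sum_(k < K.+1) _ in tb *.
have hD : 0 <= D by rewrite /D bigmax_ge_id.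
have hG : 0 <= G by rewrite /G bigmax_ge_id.
have hT : 0 <= T.
  apply: sumr_ge0 => k _; apply: divr_ge0; last exact: ltW.
  apply: mulr_ge0 => //; apply: mulr_ge0; [exact: ltW|].
  by apply: le_trans (ltW hgl) hglb.
have hX : 0 <= D * c K / (c 0%N * gl).
  apply: divr_ge0; first by apply: mulr_ge0 => //; exact: ltW.
  by apply: mulr_ge0; exact: ltW.
have e : c K * D / (gl * c 0%N * K1) = K1^-1 * (D * c K / (c 0%N * gl)).
  field; have := hc 0%N; have := hK1; move=> h1 h2.
  by rewrite (lt0r_neq0 hgl) (lt0r_neq0 h2) /= addrC natr1 (lt0r_neq0 h1).
rewrite e -mulrDr; apply: ler_wpM2l; first by rewrite invr_ge0 ltW.
lra.
Qed.
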